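(* Let $P$ be a finite poset with a unit OC interval representation $\{I_x : x\in P\}$ (each $I_x$ of length $1$, open or closed). Let $Q$ be the poset on the same ground set in which, for distinct $x,y$, $x<y$ in $Q$ if and only if the open interval $\operatorname{int}(I_x)$ lies entirely to the left of $\operatorname{int}(I_y)$ (i.e. the right endpoint of $I_x$ is at most the left endpoint of $I_y$). Partition $Q$ into antichains $A_1,\dots,A_t$ by letting $A_1$ be the set of minimal elements of $Q$, $A_2$ the set of minimal elements of $Q$ with $A_1$ removed, and so on. Then for all $i$ and all $j \ge i+2$, every $a \in A_i$ and $b \in A_j$ satisfy $a < b$ in $P$. Consequently, any two incomparable elements of $P$ lie in the same antichain $A_i$ or in consecutive antichains $A_i, A_{i+1}$.
   Context: Posets are finite and reflexive. A unit OC interval representation of a poset $P$ assigns to each element $x$ a real interval $I_x$ of length $1$ which is either open $(a,a+1)$ or closed $[a,a+1]$, such that for distinct $x,y$, $x<y$ in $P$ if and only if $I_x$ and $I_y$ are disjoint and every point of $I_x$ is less than every point of $I_y$. *)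

(* Defs.v *)
From HB Require Import structures.
From mathcomp Require Import all_boot all_order all_algebra.
From mathcomp Require Import reals.
Set Implicit Arguments. Unset Strict Implicit. Unset Printing Implicit Defensive.
Import Order.TTheory GRing.Theory Num.Theory.
Local Open Scope ring_scope.

Definition OCint (R : realType) (a : R) (cl : bool) : R -> Prop :=
  fun p => if cl then a <= p <= a + 1 else a < p < a + 1.

Definition left_of (R : realType) (I J : R -> Prop) : Prop :=
  (forall p, ~ (I p /\ J p)) /\ (forall p q, I p -> J q -> p < q).

Definition unit_OC_rep (d : Order.disp_t) (T : finPOrderType d) (R : realType)
  (a : T -> R) (cl : T -> bool) : Prop :=
  forall x y : T, x != y ->
    ((x < y)%O <-> left_of (OCint (a x) (cl x)) (OCint (a y) (cl y))).

(* Strict order of Q: x <_Q y iff x != y and right endpoint of I_x <= left endpoint of I_y. *)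
Definition Qlt (T : finType) (R : realType) (a : T -> R) (x y : T) : bool :=
  (x != y) && (a x + 1 <= a y).

Definition layer (T : finType) (R : realType) (a : T -> R) (S : {set T}) : {set T} :=
  [set x | (x \notin S) && [forall y, (y \notin S) ==> ~~ Qlt a y x]].

(* removed a n = A_1 ∪ ... ∪ A_n (with the paper's 1-based indexing). *)
Fixpoint removed (T : finType) (R : realType) (a : T -> R) (n : nat) : {set T} :=
  match n with
  | 0 => set0
  | n'.+1 => removed a n' :|: layer a (removed a n')
  end.

(* Antichain A i (0-based): A 0 is the paper's A_1, A i is the paper's A_{i+1}. *)
Definition antichainA (T : finType) (R : realType) (a : T -> R) (i : nat) : {set T} :=
  layer a (removed a i).

(* Main.v *)
Require Import Defs.
From mathcomp Require Import all_boot all_order all_algebra.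
From mathcomp Require Import reals.
From mathcomp Require Import zify.
Set Implicit Arguments. Unset Strict Implicit. Unset Printing Implicit Defensive.
Import Order.TTheory GRing.Theory Num.Theory.

Section Aux.
Variables (T : finType) (R : realType) (a : T -> R).
Local Open Scope ring_scope.

Lemma removed_mono m n : (m <= n)%N -> removed a m \subset removed a n.
Proof.
elim: n => [|n IH]; first by rewrite leqn0 => /eqP ->.
rewrite leq_eqVlt => /orP [/eqP -> //|]; rewrite ltnS => /IH H.
by apply: (subset_trans H); rewrite /= subsetUl.
Qed.

Lemma A_notin x i : x \in antichainA a i -> x \notin removed a i.
Proof. by rewrite /antichainA /layer inE => /andP []. Qed.

Lemma lt_layer x i w : x \in antichainA a i -> w \notin removed a i ->
  a x < a w + 1.
Proof.
rewrite /antichainA /layer inE => /andP [_ /forallP /(_ w)] H Hw.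
move: H; rewrite Hw /= /Qlt negb_and negbK.
case/orP => [/eqP -> | ]; first by rewrite ltrDl ltr01.
by rewrite -ltNge.
Qed.

Lemma pred_layer y j : y \in antichainA a j.+1 ->
  exists z, z \in antichainA a j /\ a z + 1 <= a y.
Proof.
move=> Hy; have Hy' := Hy; move: Hy'.
rewrite /antichainA /layer inE => /andP [Hn /forallP Hall].
move: Hn; rewrite /= inE negb_or => /andP [Hyj Hyl].
move: Hyl; rewrite inE Hyj /= negb_forall => /existsP [z].
rewrite negb_imply negbK => /andP [Hzj Hq].
exists z; split; last by move: Hq => /andP [].
have := Hall z; rewrite Hq implybF negbK /=.
rewrite in_setU => /orP [H|//]; by rewrite H in Hzj.
Qed.

Lemma all_covered n : (n <= #|removed a n|)%N \/ removed a n = setT.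
Proof.
elim: n => [|n [IH|IH]]; [by left| |by right; rewrite /= IH setUC; apply/setP => z; rewrite !inE orbT].
case: (boolP (removed a n == setT)) => [/eqP E|NE].
  by right; rewrite /= E; apply/setP => z; rewrite !inE.
have [z Hz] : exists z, z \notin removed a n.
  apply/existsP; move: NE; apply: contraR; rewrite negb_exists => /forallP H.
  by apply/eqP/setP => z; rewrite inE; move: (H z); rewrite negbK.
have [w Hw Hmin] : exists2 w, w \notin removed a n &
    forall v, v \notin removed a n -> a w <= a v.
  case: (@Order.TotalTheory.arg_minP _ R T z (fun w => w \notin removed a n) a Hz) => w Hw H.
  by exists w.
have wl : w \in layer a (removed a n).
  rewrite inE Hw /=; apply/forallP => v; apply/implyP => Hv.
  rewrite /Qlt negb_and; apply/orP; right; rewrite -ltNge.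
  by apply: (le_lt_trans (Hmin v Hv)); rewrite ltrDl ltr01.
left; rewrite /= cardsU (_ : removed a n :&: layer a (removed a n) = set0).
  rewrite cards0 subn0 -addn1; apply: leq_add => //.
  by rewrite card_gt0; apply/set0Pn; exists w.
apply/setP => v; rewrite !inE; apply/negbTE; apply/negP => /andP [H1 /andP [H2 _]].
by rewrite H1 in H2.
Qed.

Lemma exists_layer x : exists i, x \in antichainA a i.
Proof.
have Hx : x \in removed a #|T|.
  case: (all_covered #|T|) => [H|->]; last by rewrite inE.
  have /eqP E : removed a #|T| == setT by rewrite eqEcard subsetT cardsT.
  by rewrite E inE.
elim: #|T| Hx => [|n IH]; first by rewrite inE.
rewrite /= inE; case/orP => [/IH //|H]; by exists n.
Qed.

End Aux.

Theorem mainTheorem3 (d : Order.disp_t) (T : finPOrderType d) (R : realType)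
  (a : T -> R) (cl : T -> bool) :
  unit_OC_rep a cl ->
  (forall (i j : nat) (x y : T), (i.+2 <= j)%N ->
     x \in antichainA a i -> y \in antichainA a j -> (x < y)%O) /\
  (forall x y : T, x != y -> ~ (x < y)%O -> ~ (y < x)%O ->
     exists i j : nat, [/\ x \in antichainA a i, y \in antichainA a j &
       (i = j \/ j = i.+1 \/ i = j.+1)]).
Proof.
move=> Hrep.
have P1 : forall (i j : nat) (x y : T), (i.+2 <= j)%N ->
     x \in antichainA a i -> y \in antichainA a j -> (x < y)%O.
  move=> i [|[|j]] x y //; rewrite !ltnS => Hij Hx Hy.
  have [z [Hz Hzy]] := pred_layer Hy.
  have [w [Hw Hwz]] := pred_layer Hz.
  have Hw' : w \notin removed a i.
    apply: contra (A_notin Hw); apply/subsetP; exact: removed_mono.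
  have Hxw := lt_layer Hx Hw'.
  have Hlt : (a x + 1 < a y)%R.
    apply: (lt_le_trans (y := a w + 1 + 1)%R); first by rewrite ltrD2r.
    apply: (le_trans _ Hzy); by rewrite lerD2r.
  have Hne : x != y.
    apply/eqP => E; move: Hlt; rewrite E ltNge; move/negP; apply.
    by rewrite lerDl ler01.
  apply/(Hrep x y Hne); split.
  - move=> p [Hp Hq]; rewrite /OCint in Hp Hq.
    have h1 : (p <= a x + 1)%R by case: (cl x) Hp => /andP [_ h] //; exact: ltW.
    have h2 : (a y <= p)%R by case: (cl y) Hq => /andP [h _] //; exact: ltW.
    by move: (le_lt_trans h2 (le_lt_trans h1 Hlt)); rewrite ltxx.
  - move=> p q Hp Hq; rewrite /OCint in Hp Hq.
    have h1 : (p <= a x + 1)%R by case: (cl x) Hp => /andP [_ h] //; exact: ltW.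
    have h2 : (a y <= q)%R by case: (cl y) Hq => /andP [h _] //; exact: ltW.
    exact: (le_lt_trans h1 (lt_le_trans Hlt h2)).
split => // x y Hne Hxy Hyx.
have [i Hi] := exists_layer a x; have [j Hj] := exists_layer a y.
exists i, j; split => //.
case: (leqP i.+2 j) => H1; first by case: Hxy; exact: (P1 i j).
case: (leqP j.+2 i) => H2; first by case: Hyx; exact: (P1 j i).
lia.
Qed.
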